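(* Let $2<p<\frac{10}{3}$, $\lambda_3<0$, and assume $\Lambda>0$. For every $a>0$, the function $r\mapsto g(a,r)$ on $(0,+\infty)$, where $$g(a,r):=\frac12-\frac{\Lambda}{2}C_4^4\,r\,a-\frac{2|\lambda_3|}{p}C_p^p\,a^{p(1-\gamma_p)}r^{p\gamma_p-2},$$ has a unique global maximum point. Moreover, $\max_{r>0}g(a,r)>0$ if $a<\bar a$, $=0$ if $a=\bar a$, and $<0$ if $a>\bar a$, where $\bar a:=\left(\frac{1}{2\alpha}\right)^{3/4}$ and $$\alpha:=\frac12(\Lambda C_4^4)^{\frac{p\gamma_p-2}{p\gamma_p-3}}\left(\frac{4|\lambda_3|(2-p\gamma_p)C_p^p}{p}\right)^{\frac{1}{3-p\gamma_p}}+2\left(\frac{C_p^p|\lambda_3|}{p}\right)^{\frac{1}{3-p\gamma_p}}\left(\frac{4(2-p\gamma_p)}{\Lambda C_4^4}\right)^{\frac{p\gamma_p-2}{3-p\gamma_p}}.$$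
   Context: $\Lambda:=\max\{|\lambda_1-\frac{4\pi}{3}\lambda_2|,|\lambda_1+\frac{8\pi}{3}\lambda_2|\}$ for given real parameters $\lambda_1,\lambda_2$. For $q\in(2,6)$, $\gamma_q:=\frac{3(q-2)}{2q}$ and $C_q>0$ is a constant in the Gagliardo–Nirenberg inequality $\|u\|_q\le C_q\|\nabla u\|_2^{\gamma_q}\|u\|_2^{1-\gamma_q}$ for all $u\in H^1(\mathbb{R}^3)$. *)

(* Defs.v *)
From Stdlib Require Import Reals.
Open Scope R_scope.

Definition gammaq (q : R) : R := 3 * (q - 2) / (2 * q).

Definition LambdaC (l1 l2 : R) : R :=
  Rmax (Rabs (l1 - 4 * PI / 3 * l2)) (Rabs (l1 + 8 * PI / 3 * l2)).

Definition gfun (Lam C4 Cp l3 p a r : R) : R :=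
  1 / 2 - Lam / 2 * C4 ^ 4 * r * a
  - 2 * Rabs l3 / p * Rpower Cp p * Rpower a (p * (1 - gammaq p))
      * Rpower r (p * gammaq p - 2).

Definition alphaC (Lam C4 Cp l3 p : R) : R :=
  let s := p * gammaq p in
  1 / 2 * Rpower (Lam * C4 ^ 4) ((s - 2) / (s - 3))
        * Rpower (4 * Rabs l3 * (2 - s) * Rpower Cp p / p) (1 / (3 - s))
  + 2 * Rpower (Rpower Cp p * Rabs l3 / p) (1 / (3 - s))
      * Rpower (4 * (2 - s) / (Lam * C4 ^ 4)) ((s - 2) / (3 - s)).

Definition abar (Lam C4 Cp l3 p : R) : R :=
  Rpower (1 / (2 * alphaC Lam C4 Cp l3 p)) (3 / 4).

(* Main.v *)
Require Import Defs.
From Stdlib Require Import Reals Lra.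
Open Scope R_scope.

Lemma Rpower_exp u y : Rpower (exp u) y = exp (y*u).
Proof. unfold Rpower; rewrite ln_exp; reflexivity. Qed.

Lemma Rpower_pos x y : 0 < Rpower x y.
Proof. unfold Rpower; apply exp_pos. Qed.

Lemma bern x e : 0 < x -> e < 0 -> x <> 1 -> 1 + e*(x-1) < Rpower x e.
Proof.
  intros Hx He Hx1.
  assert (Hl : 1 + ln x <= x) by (rewrite <- (exp_ln x) at 2 by lra; apply exp_ineq1_le).
  assert (Hl0 : ln x <> 0).
  { intro H0; apply Hx1; rewrite <- (exp_ln x) by lra; rewrite H0; apply exp_0. }
  unfold Rpower.
  assert (1 + e * ln x < exp (e * ln x)).
  { apply exp_ineq1. intro H; apply Rmult_integral in H; destruct H; lra. }
  nra.
Qed.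

Lemma core (A B s : R) : 0<A -> 0<B -> 0<s<2 ->
  let r0 := Rpower (B*(2-s)/A) (1/(3-s)) in
  0 < r0 /\ A*r0 = (2-s)*B*Rpower r0 (s-2) /\
  forall r, 0<r -> r<>r0 -> A*r0 + B*Rpower r0 (s-2) < A*r + B*Rpower r (s-2).
Proof.
  intros HA HB Hs r0.
  assert (Hr0 : 0 < r0) by apply Rpower_pos.
  set (Q := B*(2-s)/A).
  assert (HQ : 0 < Q) by (unfold Q; apply Rdiv_lt_0_compat; nra).
  assert (Hk : A*r0 = (2-s)*B*Rpower r0 (s-2)).
  { unfold r0; fold Q. rewrite Rpower_mult.
    replace (1 / (3 - s) * (s - 2)) with ((s-2)/(3-s)) by (field; lra).
    replace (1/(3-s)) with (1 + (s-2)/(3-s)) by (field; lra).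
    rewrite Rpower_plus, Rpower_1 by exact HQ.
    unfold Q; field; lra. }
  split; [exact Hr0|split; [exact Hk|]].
  intros r Hr Hne.
  set (x := r / r0).
  assert (Hx : 0 < x) by (unfold x; apply Rdiv_lt_0_compat; lra).
  assert (Hrx : r = r0 * x) by (unfold x; field; lra).
  assert (Hx1 : x <> 1) by (intro H; apply Hne; rewrite Hrx, H; ring).
  rewrite Hrx, <- Rpower_mult_distr by lra.
  pose proof (bern x (s-2) Hx ltac:(lra) Hx1) as Hb.
  set (P := Rpower r0 (s-2)) in *.
  assert (HP : 0 < P) by apply Rpower_pos.
  assert (HBP : 0 < B*P) by nra.
  nra.
Qed.
Lemma value (L C4 Cp l3 p a : R) : 0<L -> 0<C4 -> 0<Cp -> 2<p -> p<10/3 -> l3<0 -> 0<a ->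
 let s := p*gammaq p in let A := L*C4^4*a/2 in
 let B := 2*(Rpower Cp p*Rabs l3/p)*Rpower a (p-s) in
 let r0 := Rpower (B*(2-s)/A) (1/(3-s)) in
 (3-s)*B*Rpower r0 (s-2) = alphaC L C4 Cp l3 p * Rpower a (4/3).
Proof.
  intros HL HC4 HCp Hp2 Hp3 Hl3 Ha s A B r0.
  assert (Hsv : s = 3*(p-2)/2) by (unfold s, gammaq; field; lra).
  assert (Hs : 0 < s < 2) by (rewrite Hsv; lra).
  assert (Hp : p = 2*s/3+2) by (rewrite Hsv; field).
  assert (HM : 0 < L*C4^4) by (apply Rmult_lt_0_compat; [lra| apply pow_lt; lra]).
  assert (Hc : 0 < Rpower Cp p*Rabs l3/p).
  { apply Rdiv_lt_0_compat; [apply Rmult_lt_0_compat; [apply Rpower_pos| apply Rabs_pos_lt; lra]|lra]. }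
  set (lM := ln (L*C4^4)).
  assert (eL : L*C4^4 = exp lM) by (unfold lM; rewrite exp_ln; [reflexivity|exact HM]).
  set (lc := ln (Rpower Cp p*Rabs l3/p)).
  assert (ec : Rpower Cp p*Rabs l3/p = exp lc) by (unfold lc; rewrite exp_ln; [reflexivity|exact Hc]).
  set (lD := ln (2-s)).
  assert (eD : 2-s = exp lD) by (unfold lD; rewrite exp_ln; [reflexivity|lra]).
  set (l2 := ln 2).
  assert (e2 : 2 = exp l2) by (unfold l2; rewrite exp_ln; [reflexivity|lra]).
  set (la := ln a).
  assert (ea : a = exp la) by (unfold la; rewrite exp_ln; [reflexivity|lra]).
  assert (HA : A = exp (lM + la - l2)).
  { unfold A. rewrite eL. rewrite ea at 1. unfold Rminus; rewrite !exp_plus, exp_Ropp, <- e2. field. }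
  assert (HB : B = exp (l2 + lc + (p-s)*la)).
  { unfold B. rewrite ec. change (Rpower a (p-s)) with (exp ((p-s)*la)). rewrite !exp_plus, <- e2. ring. }
  assert (HQ : B*(2-s)/A = exp ((l2 + lc + (p-s)*la) + lD - (lM + la - l2))).
  { rewrite HB, HA, eD. unfold Rdiv, Rminus. rewrite <- exp_Ropp, <- !exp_plus. f_equal; ring. }
  unfold r0. rewrite HQ, !Rpower_exp.
  unfold alphaC. cbv zeta. fold s.
  rewrite eL, !Rpower_exp.
  replace (4 * Rabs l3 * (2 - s) * Rpower Cp p / p) with (exp (l2+l2+lD+lc)).
  2:{ rewrite !exp_plus, <- eD, <- ec, <- e2. field; lra. }
  rewrite ec.
  replace (4 * (2 - s) / exp lM) with (exp (l2+l2+lD-lM)).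
  2:{ rewrite eD. unfold Rminus. rewrite !exp_plus, exp_Ropp, <- e2. field; apply Rgt_not_eq, exp_pos. }
  rewrite !Rpower_exp.
  change (Rpower a (4/3)) with (exp (4/3*la)).
  rewrite HB.
  replace (3-s) with (exp lD + 1) by (rewrite <- eD; ring).
  transitivity (exp (lD + (l2 + lc + (p - s) * la) + (s - 2) * (1 / (exp lD + 1) * (l2 + lc + (p - s) * la + lD - (lM + la - l2))))
     + exp ((l2 + lc + (p - s) * la) + (s - 2) * (1 / (exp lD + 1) * (l2 + lc + (p - s) * la + lD - (lM + la - l2))))).
  { rewrite !exp_plus. ring. }
  rewrite Rmult_plus_distr_r. f_equal.
  - replace (1/2) with (exp (-l2)) by (rewrite exp_Ropp, <- e2; field).
    rewrite <- !exp_plus. f_equal. rewrite <- eD. rewrite Hp; field; lra.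
  - replace (2 * exp (1 / (exp lD + 1) * lc)) with (exp (l2 + 1/(exp lD+1)*lc)) by (rewrite exp_plus, <- e2; reflexivity).
    rewrite <- !exp_plus. f_equal. rewrite <- eD. rewrite Hp; field; lra.
Qed.

Theorem lemma2p4 (l1 l2 l3 p C4 Cp : R) :
  0 < C4 -> 0 < Cp ->
  2 < p -> p < 10 / 3 -> l3 < 0 -> 0 < LambdaC l1 l2 ->
  forall a : R, 0 < a ->
    exists r0 : R,
      0 < r0 /\
      (forall r, 0 < r -> gfun (LambdaC l1 l2) C4 Cp l3 p a r
                          <= gfun (LambdaC l1 l2) C4 Cp l3 p a r0) /\
      (forall r1, 0 < r1 ->
         (forall r, 0 < r -> gfun (LambdaC l1 l2) C4 Cp l3 p a r
                             <= gfun (LambdaC l1 l2) C4 Cp l3 p a r1) ->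
         r1 = r0) /\
      (a < abar (LambdaC l1 l2) C4 Cp l3 p -> 0 < gfun (LambdaC l1 l2) C4 Cp l3 p a r0) /\
      (a = abar (LambdaC l1 l2) C4 Cp l3 p -> gfun (LambdaC l1 l2) C4 Cp l3 p a r0 = 0) /\
      (abar (LambdaC l1 l2) C4 Cp l3 p < a -> gfun (LambdaC l1 l2) C4 Cp l3 p a r0 < 0).
Proof.
  intros HC4 HCp Hp2 Hp3 Hl3 HL a Ha.
  set (L := LambdaC l1 l2) in *.
  pose proof (value L C4 Cp l3 p a HL HC4 HCp Hp2 Hp3 Hl3 Ha) as Hv. cbv zeta in Hv.
  set (s := p * gammaq p) in *.
  assert (Hsv : s = 3*(p-2)/2) by (unfold s, gammaq; field; lra).
  assert (Hs : 0 < s < 2) by (rewrite Hsv; lra).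
  set (A := L*C4^4*a/2) in *.
  set (B := 2*(Rpower Cp p*Rabs l3/p)*Rpower a (p-s)) in *.
  assert (HA : 0 < A) by (unfold A; apply Rdiv_lt_0_compat; [repeat apply Rmult_lt_0_compat; try lra; apply pow_lt; lra|lra]).
  assert (HB : 0 < B).
  { unfold B. assert (0 < Rpower Cp p * Rabs l3 / p).
    { apply Rdiv_lt_0_compat; [apply Rmult_lt_0_compat; [apply Rpower_pos| apply Rabs_pos_lt; lra]|lra]. }
    pose proof (Rpower_pos a (p-s)). apply Rmult_lt_0_compat; [|assumption]. lra. }
  assert (Hg : forall r, gfun L C4 Cp l3 p a r = 1/2 - (A*r + B*Rpower r (s-2))).
  { intro r. unfold gfun. fold s. replace (p*(1-gammaq p)) with (p - s) by (unfold s; ring).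
    unfold A, B. field. lra. }
  pose proof (core A B s HA HB Hs) as H. cbv zeta in H.
  set (r0 := Rpower (B*(2-s)/A) (1/(3-s))) in *.
  destruct H as [Hr0 [Hk Hlt]].
  set (al := alphaC L C4 Cp l3 p) in *.
  assert (Hval : A*r0 + B*Rpower r0 (s-2) = al * Rpower a (4/3)).
  { rewrite <- Hv, Hk. ring. }
  assert (Hal : 0 < al).
  { unfold al, alphaC. cbv zeta.
    pose proof (Rpower_pos (L * C4 ^ 4) ((p * gammaq p - 2) / (p * gammaq p - 3))).
    pose proof (Rpower_pos (4 * Rabs l3 * (2 - p * gammaq p) * Rpower Cp p / p) (1 / (3 - p * gammaq p))).
    pose proof (Rpower_pos (Rpower Cp p * Rabs l3 / p) (1 / (3 - p * gammaq p))).
    pose proof (Rpower_pos (4 * (2 - p * gammaq p) / (L * C4 ^ 4)) ((p * gammaq p - 2) / (3 - p * gammaq p))).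
    nra. }
  assert (Hab : Rpower (abar L C4 Cp l3 p) (4/3) = 1/(2*al)).
  { unfold abar. fold al. rewrite Rpower_mult.
    replace (3/4*(4/3)) with 1 by field. apply Rpower_1.
    apply Rdiv_lt_0_compat; lra. }
  assert (Hhalf : al * (1/(2*al)) = 1/2) by (field; lra).
  exists r0. split; [exact Hr0|].
  split.
  { intros r Hr. rewrite !Hg. destruct (Req_dec r r0) as [->|Hne]; [lra|].
    pose proof (Hlt r Hr Hne). lra. }
  split.
  { intros r1 Hr1 Hm. destruct (Req_dec r1 r0) as [|Hne]; [assumption|].
    specialize (Hm r0 Hr0). rewrite !Hg in Hm. pose proof (Hlt r1 Hr1 Hne). lra. }
  split.
  { intro Hlta. rewrite Hg, Hval.
    assert (Rpower a (4/3) < Rpower (abar L C4 Cp l3 p) (4/3)) by (apply Rlt_Rpower_l; lra).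
    rewrite Hab in H. pose proof (Rmult_lt_compat_l al _ _ Hal H). lra. }
  split.
  { intro Heq. rewrite Hg, Hval, Heq, Hab. lra. }
  { intro Hlta. rewrite Hg, Hval.
    assert (Rpower (abar L C4 Cp l3 p) (4/3) < Rpower a (4/3)).
    { apply Rlt_Rpower_l; [lra|]. split; [|lra]. unfold abar; apply Rpower_pos. }
    rewrite Hab in H. pose proof (Rmult_lt_compat_l al _ _ Hal H). lra. }
Qed.
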